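(* For every monomial $\mathbf{y}^\alpha\in\mathbb{K}[\mathbf{y}]$, $\deg_{y_0}(\eta(\mathbf{y}^\alpha))=\deg(\mathbf{y}^\alpha)-\delta(\psi(\mathbf{y}^\alpha))$, where $\deg$ is the total degree and $\deg_{y_0}$ the degree in $y_0$.
   Context: Let $\mathbb{K}$ be a field of characteristic $0$, $M\subset\mathbb{R}^n$ a polytope with $0\in M$, $S_M\subset\mathbb{Z}^n$ the affine semigroup generated by $M\cap\mathbb{Z}^n$ and $S_M^h\subset\mathbb{Z}^{n+1}$ the one generated by $\{(s,1):s\in M\cap\mathbb{Z}^n\}$, both assumed pointed. $\mathbb{K}[S]$ is the semigroup algebra with monomials $X^s$, $X^sX^t=X^{s+t}$; $\mathbb{K}[S_M^h]$ is graded by $\deg X^{(s,d)}=d$. $\chi:\mathbb{K}[S_M^h]\to\mathbb{K}[S_M]$, $X^{(s,d)}\mapsto X^s$. The affine degree $\delta^A(X^s)$ is the least $d$ with $(s,d)\in S_M^h$; the sparse degree of a monomial $X^{(s,d)}$ is $\delta(X^{(s,d)})=\delta^A(X^s)$. Fix a monomial order $<_M$ on $\mathbb{K}[S_M]$. Let $a_0,\dots,a_m$ be the elements of $\{(s,1):s\in M\cap\mathbb{Z}^n\}$ with $a_0=(0,1)$; $\mathbb{K}[\mathbf{y}]=\mathbb{K}[y_0,\dots,y_m]$; $\psi:\mathbb{K}[\mathbf{y}]\to\mathbb{K}[S_M^h]$ the $\mathbb{K}$-algebra epimorphism $y_i\mapsto X^{a_i}$, with kernel the lattice ideal $T$. Fix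 a monomial order $\tilde<$ on $\mathbb{K}[\mathbf{y}]$ and define the monomial order $<_y$: $\mathbf{y}^a<_y\mathbf{y}^b$ iff $\deg\mathbf{y}^a<\deg\mathbf{y}^b$; or total degrees equal and $\deg_{y_0}\mathbf{y}^a>\deg_{y_0}\mathbf{y}^b$; or both equal and $\chi(\psi(\mathbf{y}^a))<_M\chi(\psi(\mathbf{y}^b))$; or all equal and $\mathbf{y}^a\,\tilde<\,\mathbf{y}^b$. For $g\in\mathbb{K}[\mathbf{y}]$, $\eta(g)$ denotes the normal form of $g$ with respect to $T$ and $<_y$ (for a monomial this normal form is a monomial). *)

(* Defs.v *)
From HB Require Import structures.
From mathcomp Require Import all_boot all_order all_algebra.
From mathcomp Require Import reals.
From mathcomp Require Import mpoly.
Set Implicit Arguments. Unset Strict Implicit. Unset Printing Implicit Defensive.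
Import Order.TTheory GRing.Theory Num.Theory.
Local Open Scope ring_scope.

Section Defs.

Definition in_conv (R : realType) (n : nat) (V : seq 'rV[R]_n) (x : 'rV[R]_n)
  : Prop :=
  exists lam : 'I_(size V) -> R,
    (forall i, 0 <= lam i) /\ \sum_i lam i = 1 /\
    x = \sum_i lam i *: V`_i.

Definition lat_to_real (R : realType) (n : nat) (s : 'rV[int]_n) : 'rV[R]_n :=
  map_mx (fun z : int => z%:~R) s.

Variables (n m : nat).
(* a i = s_i, where a_i = (s_i, 1), i = 0..m, enumerate the lattice points. *)
Variable a : 'I_m.+1 -> 'rV[int]_n.

Definition sexp (beta : 'X_{1..m.+1}) : 'rV[int]_n :=
  \sum_(i < m.+1) (a i *+ beta i).

(* Exponent of psi(y^beta) in S_M^h : (sum_i beta_i s_i, |beta|). *)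
Definition hexp (beta : 'X_{1..m.+1}) : 'rV[int]_n * nat :=
  (sexp beta, mdeg beta).

Definition in_SM (s : 'rV[int]_n) : Prop := exists beta, sexp beta = s.

Definition in_SMh (s : 'rV[int]_n) (d : nat) : Prop :=
  exists beta, sexp beta = s /\ mdeg beta = d.

Definition pointed_SM : Prop :=
  forall s, in_SM s -> in_SM (- s) -> s = 0.

Definition affine_degree (s : 'rV[int]_n) (d : nat) : Prop :=
  in_SMh s d /\ forall d', in_SMh s d' -> (d <= d')%N.

Definition monomial_order_SM (lt : rel 'rV[int]_n) : Prop :=
  [/\ forall s, in_SM s -> ~~ lt s s,
      forall s t u, in_SM s -> in_SM t -> in_SM u -> lt s t -> lt t u -> lt s u,
      forall s t, in_SM s -> in_SM t -> s != t -> lt s t || lt t s,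
      forall s t u, in_SM s -> in_SM t -> in_SM u -> lt s t -> lt (s + u) (t + u)
    & forall s, in_SM s -> s != 0 -> lt 0 s].

Definition monomial_order_y (lt : rel 'X_{1..m.+1}) : Prop :=
  [/\ forall s, ~~ lt s s,
      forall s t u, lt s t -> lt t u -> lt s u,
      forall s t, s != t -> lt s t || lt t s,
      forall s t u, lt s t -> lt (s + u)%MM (t + u)%MM
    & forall s, s != 0%MM -> lt 0%MM s].

Variables (ltM : rel 'rV[int]_n) (ltT : rel 'X_{1..m.+1}).

Definition lt_y (al be : 'X_{1..m.+1}) : bool :=
  (mdeg al < mdeg be)%N
  || ((mdeg al == mdeg be) && (be ord0 < al ord0)%N)
  || [&& mdeg al == mdeg be, al ord0 == be ord0 & ltM (sexp al) (sexp be)]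
  || [&& mdeg al == mdeg be, al ord0 == be ord0, sexp al == sexp be
       & ltT al be].

Variable K : fieldType.

(* f in T = ker psi : the image  psi(f) = sum_beta f_beta X^(hexp beta)
   has all coefficients zero in K[S_M^h]. *)
Definition in_T (f : {mpoly K[m.+1]}) : Prop :=
  forall u : 'rV[int]_n * nat,
    \sum_(beta <- msupp f | hexp beta == u) f@_beta = 0.

Definition lead_y (f : {mpoly K[m.+1]}) (beta : 'X_{1..m.+1}) : Prop :=
  beta \in msupp f /\ forall gam, gam \in msupp f -> gam != beta -> lt_y gam beta.

Definition in_initial_T (beta : 'X_{1..m.+1}) : Prop :=
  exists f gam, [/\ in_T f, f != 0, lead_y f gam & (gam <= beta)%MM].

Definition normal_form_mon (alpha beta : 'X_{1..m.+1}) : Prop :=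
  in_T ('X_[alpha] - 'X_[beta]) /\ ~ in_initial_T beta.

End Defs.

(* Main.v *)
Require Import Defs.
From HB Require Import structures.
From mathcomp Require Import all_boot all_order all_algebra.
From mathcomp Require Import reals.
From mathcomp Require Import mpoly.
From mathcomp Require Import zify.
Import Order.TTheory GRing.Theory Num.Theory.
Local Open Scope ring_scope.

Section Aux.
Variables (K : fieldType) (n m : nat) (a : 'I_m.+1 -> 'rV[int]_n).
Hypothesis ha0 : a ord0 = 0.

Lemma sum_msupp (f : {mpoly K[m.+1]}) (P : pred 'X_{1..m.+1}) (s : seq 'X_{1..m.+1}) :
  uniq s -> {subset msupp f <= s} ->
  \sum_(x <- msupp f | P x) f@_x = \sum_(x <- s | P x) f@_x.
Proof.
move=> us sub.
rewrite [RHS](bigID (fun x => x \in msupp f)) /=.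
rewrite [X in _ = _ + X]big1 ?addr0; last first.
  by move=> x /andP[_ xn]; apply/eqP; rewrite mcoeff_eq0.
rewrite -big_filter_cond.
rewrite -[RHS]big_filter -[LHS]big_filter.
apply: perm_big.
apply: uniq_perm.
- exact/filter_uniq/msupp_uniq.
- exact/filter_uniq/filter_uniq.
move=> x; rewrite !mem_filter.
case: (boolP (x \in msupp f)) => xm /=; last by rewrite andbF.
by rewrite (sub _ xm) andbT.
Qed.

Lemma msuppXX (x y : 'X_{1..m.+1}) :
  {subset msupp ('X_[x] - 'X_[y] : {mpoly K[m.+1]}) <= [:: x; y]}.
Proof.
move=> z; rewrite !inE; apply: contraTT => nz.
rewrite -mcoeff_eq0 mcoeffB !mcoeffX.
by move: nz; rewrite ![z == _]eq_sym; case: (x =P z) => //; case: (y =P z) => //; rewrite subrr.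

Qed.

Lemma sexpD (x y : 'X_{1..m.+1}) : sexp a (x + y)%MM = sexp a x + sexp a y.
Proof.
by rewrite /sexp -big_split; apply: eq_bigr => i _; rewrite mnmDE mulrnDr.
Qed.

Lemma sexpU k : sexp a (U_(ord0) *+ k)%MM = 0.
Proof.
rewrite /sexp big1 // => i _; rewrite mulmnE mnm1E.
by case: (ord0 =P i) => [<-|_]; rewrite ?ha0 ?mul0rn // mul0n mulr0n.
Qed.

Lemma mdegU k : mdeg (U_(ord0 : 'I_m.+1) *+ k)%MM = k.
Proof. by rewrite mdegMn mdeg1 mul1n. Qed.

End Aux.

Theorem mainTheorem3
  (R : realType) (n m : nat) (V : seq 'rV[R]_n)
  (a : 'I_m.+1 -> 'rV[int]_n)
  (h0M : in_conv V 0)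
  (ha_inj : injective a)
  (ha0 : a ord0 = 0)
  (haM : forall s : 'rV[int]_n, in_conv V (lat_to_real R s) <-> exists i, a i = s)
  (hpt : pointed_SM a)
  (K : fieldType) (hK : [pchar K] =i pred0)
  (ltM : rel 'rV[int]_n) (hM : monomial_order_SM a ltM)
  (ltT : rel 'X_{1..m.+1}) (hT : monomial_order_y ltT) :
  forall alpha beta : 'X_{1..m.+1},
    normal_form_mon a ltM ltT K alpha beta ->
    forall d : nat, affine_degree a (sexp a alpha) d ->
      beta ord0 = (mdeg alpha - d)%N.
Proof.
move=> alpha beta [hTab hnin] d [[gam [sg dg]] dmin].
have binT : forall x y : 'X_{1..m.+1}, x != y ->
    in_T a ('X_[x] - 'X_[y] : {mpoly K[m.+1]}) <-> hexp a x = hexp a y.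
  move=> x y xy; split.
    move=> /(_ (hexp a x)); rewrite (@sum_msupp _ _ _ (fun b => hexp a b == hexp a x) [:: x; y]
      _ (@msuppXX _ _ x y)); last by rewrite /= inE andbT.
    have yx : (y == x) = false by rewrite eq_sym (negbTE xy).
    rewrite !big_cons big_nil eqxx addr0 mcoeffB !mcoeffX eqxx yx subr0.
    by case: eqP => [->//|_]; rewrite addr0 => /eqP; rewrite oner_eq0.
  move=> hxy u; rewrite (@sum_msupp _ _ _ (fun b => hexp a b == u) [:: x; y]
      _ (@msuppXX _ _ x y)); last by rewrite /= inE andbT.
  have yx : (y == x) = false by rewrite eq_sym (negbTE xy).
  rewrite !big_cons big_nil addr0 hxy.
  case: (hexp a y == u); rewrite ?addr0 //.
  rewrite !mcoeffB !mcoeffX ?eqxx ?(negbTE xy) ?yx.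
  by rewrite /= subr0 sub0r subrr.
have [sab dab] : sexp a beta = sexp a alpha /\ mdeg beta = mdeg alpha.
  case: (alpha =P beta) => [->//|/eqP nab].
  by move: hTab => /(binT _ _ nab) [-> ->].
apply/eqP; rewrite eqn_leq; apply/andP; split.
-
  set b' := (beta - U_(ord0) *+ beta ord0)%MM.
  have hb : beta = (b' + U_(ord0) *+ beta ord0)%MM.
    by rewrite submK //; apply/mnm_lepP => i; rewrite mulmnE mnm1E; case: eqP => [<-|]; rewrite ?mul1n ?mul0n.
  have : (d <= mdeg b')%N.
    apply: dmin; exists b'; split => //.
    by rewrite -sab [in RHS]hb sexpD // sexpU // addr0.
  move: dab; rewrite {1}hb mdegD mdegU => <-; lia.
-
  have hd : (d <= mdeg alpha)%N by apply: dmin; exists alpha.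
  set g' := (gam + U_(ord0) *+ (mdeg alpha - d))%MM.
  have sg' : sexp a g' = sexp a alpha by rewrite sexpD // sexpU // addr0.
  have dg' : mdeg g' = mdeg alpha by rewrite mdegD mdegU dg; lia.
  have g0 : (mdeg alpha - d <= g' ord0)%N.
    by rewrite mnmDE mulmnE mnm1E eqxx ?mul1n ?muln1 leq_addl.
  rewrite leqNgt; apply/negP => lt0.
  have lt1 : (beta ord0 < g' ord0)%N by apply: leq_trans g0.
  have ngb : beta != g' by apply/eqP => E; move: lt1; rewrite E ltnn.
  apply: hnin; exists ('X_[beta] - 'X_[g'] : {mpoly K[m.+1]}), beta; split.
  + by apply/binT => //; rewrite /hexp sab sg' dab dg'.
  + rewrite subr_eq0; apply/negP => /eqP /(congr1 (mcoeff beta)).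
    by rewrite !mcoeffX eqxx eq_sym (negbTE ngb) => /eqP; rewrite oner_eq0.
  + split.
      by rewrite -[_ \in _]negbK -mcoeff_eq0 mcoeffB !mcoeffX eqxx ?(negbTE ngb) ?[g' == _]eq_sym ?(negbTE ngb) subr0 oner_eq0.
    move=> x /msuppXX; rewrite !inE => /orP[/eqP->|/eqP->]; first by rewrite eqxx.
    move=> _; rewrite /lt_y dab dg' eqxx lt1 /=; lia.
  + exact: lepm_refl.
Qed.
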